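(* Let $q$ be a prime power, $n\ge1$, $A\in GL_n(\mathbb{F}_q)$, let $p_{A,1}^{e_{A,1}},\dots,p_{A,m}^{e_{A,m}}\in\mathbb{F}_q[x]$ be the elementary divisors of $A$ (the monic irreducible polynomials $p_{A,j}$ not necessarily distinct), and let $\mathfrak{S}_A=\langle A\rangle<GL_n(\mathbb{F}_q)$. Then for every $i\in\mathbb{N}$ with $\gcd(i,|\mathfrak{S}_A|)=1$, the matrix $A^i$ has exactly $m$ elementary divisors, and if they are denoted $p_{A^i,1}^{e_{A^i,1}},\dots,p_{A^i,m}^{e_{A^i,m}}$, then, after a suitable reordering, $\mathrm{ord}(p_{A,j})=\mathrm{ord}(p_{A^i,j})$ and $e_{A,j}=e_{A^i,j}$ for $j=1,\dots,m$.
   Context: The elementary divisors of $A\in GL_n(\mathbb{F}_q)$ are the prime-power polynomials $p^{e}$ ($p$ monic irreducible) appearing in the rational canonical form of $A$, i.e. the unique (up to order) list such that $A$ is conjugate in $GL_n(\mathbb{F}_q)$ to the block diagonal matrix of the companion matrices of these polynomials. For $p\in\mathbb{F}_q[x]$ with $p(0)\neq 0$, $\mathrm{ord}(p)$ is the least positive integer $e$ with $p\mid x^e-1$. *)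

(* Defs.v *)
From Stdlib Require Import ClassicalDescription.
From HB Require Import structures.
From mathcomp Require Import all_boot all_order all_algebra all_fingroup all_field.
Set Implicit Arguments. Unset Strict Implicit. Unset Printing Implicit Defensive.
Import GRing.Theory.
Local Open Scope ring_scope.

(* ord(p): the least e > 0 with p | x^e - 1 (set to 0 if no such e exists,
   which never happens for p(0) <> 0 over a finite field). *)
Definition poly_ord (F : fieldType) (p : {poly F}) : nat :=
  match excluded_middle_informative
          (exists e : nat, (0 < e)%N && (p %| 'X^e - 1)) with
  | left h => ex_minn h
  | right _ => 0%N
  end.

Fixpoint bdiag_comp (F : fieldType) (s : seq {poly F}) :
    'M[F]_(foldr (fun (p : {poly F}) k => (size p).-1 + k)%N 0%N s) :=
  match s with
  | [::] => 0
  | p :: s' => block_mx (companionmx p) 0 0 (bdiag_comp s')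
  end.

(* Conjugacy of square matrices possibly indexed by different (hence, in
   fact, equal) dimensions: A = P B P^-1 with P invertible. *)
Definition mx_similar (F : fieldType) (n k : nat) (A : 'M[F]_n) (B : 'M[F]_k) :=
  exists (P : 'M[F]_(n, k)) (Q : 'M[F]_(k, n)),
    [/\ P *m Q = 1%:M, Q *m P = 1%:M & A *m P = P *m B].

(* s = [:: (p_1, e_1); ...; (p_m, e_m)] is the list of elementary divisors
   p_j^e_j of A: p_j monic irreducible, e_j >= 1, and A is conjugate to the
   block-diagonal matrix of the companion matrices of the p_j^e_j. *)
Definition elem_divisors (F : fieldType) (n : nat) (A : 'M[F]_n)
    (s : seq ({poly F} * nat)) : Prop :=
  [/\ forall x, x \in s -> x.1 \is monic,
      forall x, x \in s -> irreducible_poly x.1,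
      forall x, x \in s -> (0 < x.2)%N
    & mx_similar A (bdiag_comp [seq x.1 ^+ x.2 | x <- s])].

(* Main.v *)
Require Import Defs.
From Stdlib Require Import ClassicalDescription.
From HB Require Import structures.
From mathcomp Require Import all_boot all_order all_algebra all_fingroup all_field.
From mathcomp Require Import all_solvable zify.
Set Implicit Arguments. Unset Strict Implicit. Unset Printing Implicit Defensive.

Lemma minsum_count (s : seq nat) k :
  \sum_(x <- s) minn k.+1 x = \sum_(x <- s) minn k x + count (fun x => k < x) s.
Proof.
elim: s => [|x s IH]; rewrite ?big_nil ?big_cons //= IH.
case: (ltnP k x) => H /=; lia.
Qed.

Lemma count_pred_split (s : seq nat) x : 0 < x ->
  count (fun y => x.-1 < y) s = count_mem x s + count (fun y => x < y) s.
Proof.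
move=> x0; elim: s => [|y s IH] //=; rewrite IH.
case: (ltngtP y x) => H /=; lia.
Qed.

Lemma permA (s1 s2 : seq nat) :
  all (leq 1) s1 -> all (leq 1) s2 ->
  (forall k, \sum_(x <- s1) minn k x = \sum_(x <- s2) minn k x) ->
  perm_eq s1 s2.
Proof.
move=> a1 a2 H.
have cnt k : count (fun x => k < x) s1 = count (fun x => k < x) s2.
  by have := H k.+1; rewrite !minsum_count H => /addnI.
apply/allP => x _ /=; apply/eqP.
case: x => [|x].
  have c0 (s : seq nat) : all (leq 1) s -> count_mem 0 s = 0.
    by elim: s => [|y s IH] //= /andP[y1 /IH ->]; case: y y1.
  by rewrite !c0.
have := cnt x; rewrite -[x]/(x.+1.-1) !count_pred_split // cnt => /addIn.
by [].
Qed.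

Definition Gs (D : nat -> nat) (T : seq (nat * nat)) d k :=
  \sum_(y <- T) (y.1 %| d) * D y.1 * minn k y.2.

Lemma sum_ord_eq (x n : nat) (G : nat -> nat) :
  \sum_(i < n) (x == i) * G i = (x < n) * G x.
Proof.
elim: n => [|n IH]; first by rewrite big_ord0.
rewrite big_ord_recr /= IH; case: (ltngtP x n) => H.
all: simpl; rewrite ?mul0n ?mul1n ?addn0 ?add0n //.
all: try lia.
by rewrite H ltnSn mul1n.
Qed.

Lemma filter_none (T : eqType) (P : pred T) (s : seq T) :
  (forall y, y \in s -> ~~ P y) -> filter P s = [::].
Proof.
elim: s => [|y s IH] //= H; rewrite (negPf (H y _)) ?mem_head //.
by apply: IH => z zs; apply: H; rewrite inE zs orbT.
Qed.

Lemma permB (c : nat) (D : nat -> nat) (T1 T2 : seq (nat * nat)) :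
  (forall y, y \in T1 ++ T2 -> [&& 0 < y.1, coprime y.1 c, 0 < y.2 & 0 < D y.1]) ->
  (forall d k, 0 < d -> coprime d c -> Gs D T1 d k = Gs D T2 d k) ->
  perm_eq T1 T2.
Proof.
move=> HT HG.
pose f (T : seq (nat * nat)) (o : nat) := [seq y <- T | y.1 == o].
have decomp T o k : 0 < o ->
   Gs D T o k = \sum_(o' < o.+1) \sum_(y <- f T o') ((o' %| o) * D o' * minn k y.2).
  move=> o0; rewrite /Gs.
  transitivity (\sum_(y <- T) \sum_(o' < o.+1) (y.1 == o') * ((o' %| o) * D o' * minn k y.2)).
    apply: eq_bigr => y _; rewrite (sum_ord_eq y.1 o.+1 (fun o' => (o' %| o) * D o' * minn k y.2)).
    case dy: (y.1 %| o); last by rewrite mul0n muln0.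
    by rewrite ltnS dvdn_leq //= mul1n mulnA mul1n.
  rewrite exchange_big; apply: (@eq_bigr _ _ _ _ _ _ (fun o' : 'I_o.+1 => _)) => o' _.
  by rewrite big_filter [RHS]big_mkcond; apply: eq_bigr => y _; case: eqP; rewrite ?mul1n ?mul0n.
have key o : perm_eq (f T1 o) (f T2 o).
  elim/ltn_ind: o => o IH.
  case V: ((0 < o) && coprime o c); last first.
    rewrite /f !filter_none //.
      move=> y yT; apply/negP => /eqP yo; move: (HT y); rewrite mem_cat yT orbT.
      by move/(_ isT) => /and4P[y1 y2 _ _]; rewrite -yo y1 y2 in V.
    move=> y yT; apply/negP => /eqP yo; move: (HT y); rewrite mem_cat yT.
    by move/(_ isT) => /and4P[y1 y2 _ _]; rewrite -yo y1 y2 in V.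
  case/andP: V => o0 co.
  have Hk k : \sum_(y <- f T1 o) (D o * minn k y.2) = \sum_(y <- f T2 o) (D o * minn k y.2).
    have := HG o k o0 co; rewrite !decomp // !big_ord_recr /= dvdnn mul1n.
    have -> : \sum_(i < o) \sum_(y <- f T1 i) ((i %| o) * D i * minn k y.2) =
              \sum_(i < o) \sum_(y <- f T2 i) ((i %| o) * D i * minn k y.2).
      by apply: eq_bigr => i _; apply: perm_big; apply: IH.
    by move/addnI.
  have Dp y : y \in f T1 o ++ f T2 o -> 0 < D o.
    rewrite mem_cat !mem_filter => /orP[] /andP[/eqP <- yT];
    by have := HT y; rewrite mem_cat yT ?orbT => /(_ isT)/and4P[].
  have D0 : 0 < D o \/ (f T1 o = [::] /\ f T2 o = [::]).
    case E1: (f T1 o) => [|y s1]; case E2: (f T2 o) => [|z s2]; try by right.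
    - by left; apply: (Dp z); rewrite E1 E2 mem_head.
    - by left; apply: (Dp y); rewrite E1 E2 mem_head.
    - by left; apply: (Dp y); rewrite E1 E2 mem_head.
  case: D0 => [D0|[-> ->]] //.
  have Hk' k : \sum_(x <- map snd (f T1 o)) minn k x = \sum_(x <- map snd (f T2 o)) minn k x.
    have := Hk k; rewrite -!big_distrr /= => /eqP; rewrite eqn_pmul2l // => /eqP.
    by rewrite !big_map.
  have allpos T : (forall y, y \in T -> 0 < y.2) -> all (leq 1) (map snd (f T o)).
    move=> HP; apply/allP => x /mapP [y]; rewrite mem_filter => /andP[_ yT] ->.
    exact: HP.
  have P12 := permA (allpos _ _) (allpos _ _) Hk'.
  have fE T : f T o = map (pair o) (map snd (f T o)).
    rewrite -map_comp -[LHS]map_id; apply/eq_in_map => y.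
    by rewrite mem_filter => /andP[/eqP <- _]; case: y.
  rewrite (fE T1) (fE T2); apply: perm_map; apply: P12.
  + by move=> y yT; have := HT y; rewrite mem_cat yT => /(_ isT)/and4P[].
  + by move=> y yT; have := HT y; rewrite mem_cat yT orbT => /(_ isT)/and4P[].
apply/allP => y _ /=; have /seq.permP/(_ (pred1 y)) := key y.1.
rewrite /f !count_filter => E; rewrite -!(@eq_count _ (predI (pred1 y) (fun z => z.1 == y.1))) //.
  by apply/eqP.
all: by move=> z /=; case: eqP => [->|]; rewrite ?eqxx.
Qed.

Import GRing.Theory.
Local Open Scope ring_scope.

Section PolyOrd.
Variable F : fieldType.
Implicit Types p q r : {poly F}.

Lemma dvd_Xpow_sub1 p a t : p %| 'X^a - 1 -> p %| 'X^(a * t) - 1.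
Proof.
move=> H; rewrite exprM subrX1; exact: dvdp_mulr.
Qed.

Lemma ord_dvd p d : (0 < d)%N -> (p %| 'X^d - 1) = (poly_ord p %| d)%N.
Proof.
move=> d0; rewrite /poly_ord; case: excluded_middle_informative => [h|h].
  case: ex_minnP => o /andP[o0 po] omin.
  apply/idP/idP => [pd|od]; last by rewrite -(divnK od) mulnC dvd_Xpow_sub1.
  have Ed : 'X^d - 1 = 'X^(d %% o) * ('X^(o * (d %/ o)) - 1) + ('X^(d %% o) - 1) :> {poly F}.
    rewrite mulrBr mulr1 -exprD addrA subrK; congr (_ - _); congr ('X^_).
    by rewrite mulnC addnC -divn_eq.
  have pr : p %| 'X^(d %% o) - 1.
    rewrite Ed (dvdp_addr _ (dvdp_mull _ (dvd_Xpow_sub1 _ po))) in pd; exact pd.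
  apply/negPn/negP => nd.
  have r0 : (0 < d %% o)%N by rewrite lt0n.
  have := omin _ (introT andP (conj r0 pr)).
  by rewrite leqNgt ltn_pmod.
rewrite dvd0n (gtn_eqF d0); apply/negP => pd.
by apply: h; exists d; rewrite d0 pd.
Qed.

Lemma ord_pos_ex p : (0 < poly_ord p)%N -> exists2 e, (0 < e)%N & p %| 'X^e - 1.
Proof.
rewrite /poly_ord; case: excluded_middle_informative => [h|h] //.
by case: ex_minnP => o /andP[o0 po] _ _; exists o.
Qed.

Lemma ord_pos p e : (0 < e)%N -> p %| 'X^e - 1 -> (0 < poly_ord p)%N.
Proof.
move=> e0 pe; have := ord_dvd p e0; rewrite pe => /esym.
by apply: contraTT; rewrite -eqn0Ngt => /eqP ->; rewrite dvd0n -lt0n.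
Qed.

Lemma irr_dvd_exp p q k : irreducible_poly p -> p %| q ^+ k -> p %| q.
Proof.
move=> pI pqk; apply/negPn/negP => npq.
have cp : coprimep p (q ^+ k) by apply: coprimep_expr; rewrite irreducible_poly_coprime.
have : p %| 1 by rewrite -(Gauss_dvdpl 1 cp) mul1r.
by rewrite dvdp1; case: pI => /gtn_eqF ->.
Qed.

Lemma ord_coprime p c : c \in [pchar F] -> irreducible_poly p ->
  (0 < poly_ord p)%N -> coprime (poly_ord p) c.
Proof.
move=> hc pI o0; set o := poly_ord p in o0 *.
have cpr : prime c := pcharf_prime hc.
rewrite coprime_sym prime_coprime //; apply/negP => /dvdnP [o' Eo].
have o'0 : (0 < o')%N by move: o0; rewrite Eo muln_gt0 => /andP[].
have hcp : c \in [pchar {poly F}] by rewrite (pchar_poly F).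
have : p %| 'X^o - 1 by rewrite ord_dvd.
rewrite Eo exprM -(pFrobenius_autE hcp) -[1](pFrobenius_aut1 hcp) -pFrobenius_autB_comm;
  last exact: commr1.
rewrite pFrobenius_autE => /(irr_dvd_exp pI); rewrite ord_dvd // -/o => /dvdn_leq.
move/(_ o'0); rewrite Eo -{2}[o']muln1 leq_pmul2l // => c1.
by move: (prime_gt1 cpr); rewrite ltnNge c1.
Qed.

Lemma irr_size p : irreducible_poly p -> (1 < size p)%N.
Proof. by case. Qed.

Lemma irr_not_dvd1 p : irreducible_poly p -> ~~ (p %| 1).
Proof. by move=> pI; rewrite dvdp1 gtn_eqF // irr_size. Qed.

Lemma sqfree_Xd p d : irreducible_poly p -> (0 < d)%N -> d%:R != 0 :> F ->
  ~~ (p ^+ 2 %| 'X^d - 1).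
Proof.
move=> pI d0 dn0; apply/negP => /dvdpP [u Eu].
have pp2 : p %| p ^+ 2 by rewrite expr2 dvdp_mull.
have : p %| ('X^d - 1)^`().
  rewrite Eu derivM; apply: dvdp_add; first by rewrite dvdp_mull.
  by rewrite expr2 derivM; apply: dvdp_mull; apply: dvdp_add;
    [rewrite dvdp_mull | rewrite dvdp_mulr].
rewrite derivB derivXn -polyC1 derivC subr0 -scaler_nat dvdpZr //.
move=> /(irr_dvd_exp pI) pX.
have pXd : p %| 'X^d by rewrite dvdp_exp.
have : p %| 'X^d - ('X^d - 1) by rewrite dvdp_sub // Eu dvdp_mull.
by rewrite opprB addrCA subrr addr0 (negPf (irr_not_dvd1 pI)).
Qed.

Lemma sqfree_X p : irreducible_poly p -> ~~ (p ^+ 2 %| 'X).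
Proof.
move=> pI; apply/negP => /(dvdp_leq (negbT (polyX_eq0 _))); rewrite size_polyX.
have := size_exp p 2; have := irr_size pI.
case: (size (p ^+ 2)) => [|[|[|s]]] //=; case: (size p) => [|[|sp]] //= _; lia.
Qed.

End PolyOrd.

Definition Dq (q o : nat) : nat :=
  match excluded_middle_informative (exists t, (0 < t)%N && (o %| q ^ t - 1)%N) with
  | left h => ex_minn h
  | right _ => 0%N
  end.

Lemma frobD (R : comNzRingType) c (hc : c \in [pchar R]) n (a b : R) :
  (a + b) ^+ (c ^ n) = a ^+ (c ^ n) + b ^+ (c ^ n).
Proof.
elim: n => [|n IH]; first by rewrite !expr1.
rewrite expnSr !exprM IH -!(pFrobenius_autE hc) pFrobenius_autD_comm //.
exact: mulrC.
Qed.

Lemma deg_ord (F : finFieldType) (p : {poly F}) :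
  p \is monic -> irreducible_poly p -> ~~ (p %| 'X) ->
  (0 < poly_ord p)%N /\ (size p).-1 = Dq #|F| (poly_ord p).
Proof.
move=> pM pI pX.
have hI : monic_irreducible_poly p := (pI, pM).
pose K := {poly %/ p with hI}.
have Q1 r : (in_qpoly p r == 0) = (p %| r).
  apply/eqP/idP => [/val_eqP /= | hDp].
    by rewrite -Pdiv.IdomainMonic.modpE ?(mk_monicE hI) // ?dvdpE.
  apply/val_eqP; rewrite /= -Pdiv.IdomainMonic.modpE ?(mk_monicE hI) //.
pose x : K := 'qX.
have xn n : (x ^+ n == 1) = (p %| 'X^n - 1).
  rewrite -Q1 rmorphB rmorph1 rmorphXn /= subr_eq0 //.
have x0 : x != 0 by rewrite Q1.
set q := #|F|; set m := (size p).-1.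
have cardK : #|K| = (q ^ m)%N := card_qfpoly hI.
have q1 : (1 < q)%N := card_finNzRing_gt1 F.
have m0 : (0 < m)%N by have := irr_size pI; rewrite /m; case: (size p) => [|[]].
have qm0 : (0 < q ^ m - 1)%N by rewrite subn_gt0 -[1%N](expn0 q) ltn_exp2l.
have xq : x ^+ (q ^ m - 1) == 1.
  have h1 : (1 <= q ^ m)%N by rewrite expn_gt0 ltnW.
  have H : x ^+ (q ^ m - 1) * x = x by rewrite -exprSr subn1 prednK // -cardK expf_card.
  by apply/eqP; apply: (mulIf x0); rewrite mul1r.
have Em : p %| 'X^(q ^ m - 1) - 1 by rewrite -xn.
have o0 : (0 < poly_ord p)%N := ord_pos qm0 Em.
split => //.
rewrite /Dq; case: excluded_middle_informative => [h|h]; last first.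
  by exfalso; apply: h; exists m; rewrite m0 -ord_dvd.
case: ex_minnP => t /andP[t0 ot] tmin; apply/eqP; rewrite eqn_leq.
rewrite tmin ?m0 -?ord_dvd // andbT.
have qt0 : (0 < q ^ t - 1)%N by rewrite subn_gt0 -[1%N](expn0 q) ltn_exp2l.
have xt : x ^+ (q ^ t) = x.
  move: ot; rewrite -ord_dvd // -xn => /eqP xt.
  have h1 : (1 <= q ^ t)%N by rewrite expn_gt0 ltnW.
  by rewrite -(prednK h1) -subn1 exprSr xt mul1r.
case: (finPcharP F) => c cpr hc.
have cardq : q = (c ^ logn c q)%N := card_pprimeChar hc.
have hcK : c \in [pchar {poly %/ p}] by rewrite pchar_qpoly.
set Q := (q ^ t)%N.
have QE : Q = (c ^ (logn c q * t))%N by rewrite /Q {1}cardq expnM.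
have fixF (a : F) : a ^+ Q = a.
  rewrite /Q; elim: (t) => [|t' IH]; first by rewrite expr1.
  by rewrite expnSr exprM IH expf_card.
have fixall (u : {poly F}) : (in_qpoly p u : {poly %/ p}) ^+ Q = in_qpoly p u.
  elim/poly_ind: u => [|u a IH].
    have Q0 : Q != 0%N by rewrite -lt0n /Q expn_gt0 ltnW.
    by rewrite rmorph0 expr0n (negPf Q0).
  rewrite rmorphD rmorphM /= QE frobD // -QE exprMn IH.
  have -> : (in_qpoly p 'X : {poly %/ p}) ^+ Q = in_qpoly p 'X by exact: xt.
  by rewrite -rmorphXn /= -rmorphXn /= fixF.
have allK (y : K) : y ^+ Q = y.
  have E : (in_qpoly p (y : {poly F}) : {poly F}) = y by rewrite in_qpoly_small // size_mk_monic.
  have -> : y = in_qpoly p (y : {poly F}) by apply/esym; exact: (@val_inj _ _ _ (in_qpoly p (y : {poly F})) (y : {poly %/ p}) E).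
  exact: fixall.
have Q1' : (1 < Q)%N by rewrite /Q -[1%N](expn0 q) ltn_exp2l.
pose P : {poly K} := 'X^Q - 'X.
have sP : size P = Q.+1.
  by rewrite /P size_addl ?size_polyXn // size_opp size_polyX ltnS.
have P0 : P != 0 by rewrite -size_poly_eq0 sP.
have := max_poly_roots P0 (rs := enum K).
rewrite sP -cardE cardK enum_uniq ltnS => H.
have : (q ^ m <= q ^ t)%N.
  apply: H => //; elim: (enum K) => //= y s ->; rewrite andbT /root /P !hornerE allK subrr //.
by rewrite leq_exp2l.
Qed.

Section Rep.
Variable F : fieldType.
Implicit Types f r h u : {poly F}.

Definition rep f N (M : 'M[F]_N) r :=
  forall v : 'rV_N, v *m M = poly_rV (rVpoly v * r %% f).

Variables (f : {poly F}) (N : nat).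
Hypothesis fM : f \is monic.
Hypothesis sf : size f = N.+1.

Lemma f0 : f != 0.
Proof. by rewrite -size_poly_eq0 sf. Qed.

Lemma size_mod_le u : (size (u %% f)%R <= N)%N.
Proof. by rewrite -ltnS -sf ltn_modp f0. Qed.

Lemma size_rV (v : 'rV[F]_N) : (size (rVpoly v) <= N)%N.
Proof. exact: size_poly. Qed.

Lemma rep_mul (M1 M2 : 'M_N) r1 r2 : rep f M1 r1 -> rep f M2 r2 ->
  rep f (M1 *m M2) (r1 * r2).
Proof.
move=> H1 H2 v; rewrite mulmxA H1 H2 poly_rV_K ?size_mod_le //.
by rewrite mulrC modp_mul mulrA [_ * r2]mulrC mulrA [r2 * _]mulrC.
Qed.

Lemma rep_scal (b : F) : rep f (b%:M : 'M_N) b%:P.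
Proof.
move=> v; rewrite mul_mx_scalar mulrC mul_polyC modpZl modp_small.
  by rewrite linearZ /= rVpolyK.
by rewrite sf ltnS size_rV.
Qed.

Lemma rep_1 : rep f (1%:M : 'M_N) 1.
Proof. by have := rep_scal 1; rewrite polyC1. Qed.

Lemma rep_sub (M1 M2 : 'M_N) r1 r2 : rep f M1 r1 -> rep f M2 r2 ->
  rep f (M1 - M2) (r1 - r2).
Proof.
move=> H1 H2 v; rewrite mulmxBr H1 H2 mulrBr modpD modpN.
by rewrite linearB.
Qed.

Lemma rep_exp (M : 'M_N) r k : rep f M r -> rep f (M ^+ k) (r ^+ k).
Proof.
move=> H; elim: k => [|k IH]; first by rewrite !expr0; exact: rep_1.
by rewrite !exprS -mulmxE; apply: rep_mul.
Qed.

End Rep.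

Section Comp.
Variable F : fieldType.

Lemma modp_sumZ (f : {poly F}) n (P : 'I_n -> {poly F}) :
  (\sum_(i < n) P i) %% f = \sum_(i < n) (P i %% f).
Proof.
elim: n P => [|n IH] P; first by rewrite !big_ord0 mod0p.
by rewrite !big_ord_recr /= modpD IH.
Qed.

Lemma rVpoly_sum N (v : 'rV[F]_N) : rVpoly v = \sum_(i < N) v 0 i *: 'X^i.
Proof. by rewrite /rVpoly poly_def; apply: eq_bigr => i _; rewrite valK. Qed.

Lemma row_companion (f : {poly F}) (i : 'I_(size f).-1) : f \is monic ->
  row i (companionmx f) = poly_rV ('X^(i.+1) %% f).
Proof.
move=> fM; set N := (size f).-1 in i *.
have sf : size f = N.+1 by rewrite /N prednK // size_poly_gt0 monic_neq0.
have iN := ltn_ord i.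
apply/rowP => j; rewrite !mxE.
case: eqP => [iE|iE].
  have -> : 'X^(i.+1) %% f = 'X^(i.+1) - f.
    rewrite -[X in X %% _](subrK f) -[X in _ + X]mul1r addrC modp_addl_mul_small //.
    rewrite sf ltnS; apply/leq_sizeP => k Nk; rewrite coefB coefXn.
    case: (ltngtP k N) Nk => // [Hk _|Hk _].
      have ki : (k == i.+1) = false.
        by apply/negbTE; apply/eqP => E; move: Hk iN sf; rewrite E iE; lia.
      by rewrite (nth_default _ (_ : size f <= k)%N) ?sf // ki subr0.
    move: fM; rewrite monicE lead_coefE sf /= => /eqP fN.
    have N0 : (0 < N)%N := leq_ltn_trans (leq0n i) iN.
    have -> : (k == i.+1) by rewrite Hk iE sf /= prednK.
    by rewrite Hk fN subrr.
  rewrite coefB coefXn.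
  have N0 : (0 < N)%N := leq_ltn_trans (leq0n i) iN.
  have -> : (j == i.+1 :> nat) = false by rewrite iE sf /= prednK // ltn_eqF.
  by rewrite sub0r.
rewrite modp_small; last first.
  rewrite size_polyXn sf ltnS ltn_neqAle iN andbT; apply/eqP => E; apply: iE.
  change (nat_of_ord i = N.-1); apply: succn_inj; rewrite E prednK //.
  exact: leq_ltn_trans (leq0n i) iN.
by rewrite coefXn eq_sym.
Qed.

Lemma rep_comp (f : {poly F}) : f \is monic -> rep f (companionmx f) 'X.
Proof.
move=> fM v; rewrite mulmx_sum_row.
under eq_bigr => i _ do rewrite row_companion // -linearZ.
rewrite -linear_sum /=; congr poly_rV.
under eq_bigr => i _ do rewrite -modpZl.
rewrite -modp_sumZ; congr (_ %% _).
rewrite rVpoly_sum mulr_suml; apply: eq_bigr => i _.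
by rewrite -scalerAl exprSr.
Qed.

End Comp.

Section RankRep.
Variable F : fieldType.

Lemma rank_rep (f h r : {poly F}) (M : 'M_((size f).-1)) :
  f \is monic -> h \is monic -> h %| f -> rep f M r ->
  (forall u, (f %| u * r) = (h %| u)) -> \rank M = (size h).-1.
Proof.
move=> fM hM hf Mr ker.
set N := (size f).-1 in M Mr *.
have sf : size f = N.+1 by rewrite /N prednK // size_poly_gt0 monic_neq0.
have h0 : h != 0 := monic_neq0 hM.
have shN : ((size h).-1 <= N)%N.
  by have := dvdp_leq (f0 sf) hf; rewrite sf; case: (size h).
set N' := (N - (size h).-1)%N.
pose K : 'M[F]_(N', N) := \matrix_(i < N') poly_rV (h * 'X^i).
have Kw (w : 'rV_N') : w *m K = poly_rV (h * rVpoly w).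
  rewrite mulmx_sum_row rVpoly_sum mulr_sumr linear_sum; apply: eq_bigr => i _.
  by rewrite rowK -linearZ /= scalerAr.
have bnd (w : 'rV_N') : (size (h * rVpoly w)%R <= N)%N.
  apply: leq_trans (size_polyMleq _ _) _; have := size_poly N' (fun k => if insub k is Some i then w 0 i else 0).
  rewrite -/(rVpoly w) => sw; have sh : (0 < size h)%N by rewrite size_poly_gt0.
  move: sw sh shN; rewrite /N'; lia.
have Kinj (w : 'rV_N') : w *m K = 0 -> w = 0.
  rewrite Kw => /(congr1 rVpoly); rewrite poly_rV_K ?bnd // linear0 => /eqP.
  rewrite mulf_eq0 (negPf h0) /= => /eqP w0.
  by rewrite -[w]rVpolyK w0 linear0.
have rK : \rank K = N'.
  have kK : kermx K = 0.
    apply/row_matrixP => i; rewrite row0; apply: Kinj.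
    by rewrite -row_mul mulmx_ker row0.
  have := mxrank_ker K; rewrite kK mxrank0 => /esym/eqP; rewrite subn_eq0 => H.
  by apply/eqP; rewrite eqn_leq H rank_leq_row.
have sub1 : (K <= kermx M)%MS.
  apply/sub_kermxP; apply/row_matrixP => i; rewrite row_mul rowK row0 Mr.
  have si : (size (h * 'X^i)%R <= N)%N.
    by have := bnd (delta_mx 0 i); rewrite rVpoly_delta.
  rewrite poly_rV_K // modp_eq0 ?linear0 //.
  by rewrite ker dvdp_mulr.
have sub2 : (kermx M <= K)%MS.
  apply/row_subP => i; set v := row i (kermx M).
  have vM : v *m M = 0 by rewrite /v -row_mul mulmx_ker row0.
  have : f %| rVpoly v * r.
    move: vM; rewrite Mr => /(congr1 rVpoly); rewrite poly_rV_K ?(size_mod_le sf) // linear0.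
    by move/modp_eq0P.
  rewrite ker => hv.
  apply/submxP; exists (poly_rV (rVpoly v %/ h)).
  rewrite Kw poly_rV_K; first by rewrite mulrC divpK // rVpolyK.
  rewrite size_divp // /N'; have := size_poly N (fun k => if insub k is Some i then v 0 i else 0).
  rewrite -/(rVpoly v); exact: leq_sub2r.
have rkM : \rank (kermx M) = N'.
  by apply/eqP; rewrite eqn_leq -{1}rK mxrankS //= -rK mxrankS.
move: rkM; rewrite mxrank_ker /N' => E.
have := rank_leq_col M; move: E shN; lia.
Qed.

End RankRep.

Section RankBlock.
Variable F : fieldType.

Lemma rank_block (p s : {poly F}) e k (M : 'M_((size (p ^+ e)).-1)) :
  p \is monic -> irreducible_poly p -> (0 < e)%N -> ~~ (p ^+ 2 %| s) ->
  rep (p ^+ e) M (s ^+ k) ->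
  (\rank M + (p %| s)%R * ((size p).-1 * minn k e) = (size p).-1 * e)%N.
Proof.
move=> pM pI e0 ns Mr.
have p0 : p != 0 := monic_neq0 pM.
have fM : p ^+ e \is monic := monic_exp e pM.
case ps: (p %| s).
  set t := s %/ p; have st : s = t * p := esym (divpK ps).
  have ct : coprimep p t.
    rewrite irreducible_poly_coprime //; apply/negP => pt; move/negP: ns; apply.
    by rewrite st expr2 dvdp_mul.
  have ker u : (p ^+ e %| u * s ^+ k) = (p ^+ (e - k) %| u).
    rewrite st exprMn [t ^+ k * _]mulrC mulrA Gauss_dvdpl ?dvdp_exp_sub //.
    exact: coprimep_expl (coprimep_expr k ct).
  have hM : p ^+ (e - k) \is monic := monic_exp _ pM.
  have := rank_rep fM hM (dvdp_exp2l p (leq_subr k e)) Mr ker.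
  move=> ->; rewrite size_exp mul1n -mulnDr; congr (_ * _)%N; lia.
have cs : coprimep p s by rewrite irreducible_poly_coprime // ps.
have ker u : (p ^+ e %| u * s ^+ k) = (p ^+ e %| u).
  by rewrite Gauss_dvdpl //; exact: coprimep_expl (coprimep_expr k cs).
have := rank_rep fM fM (dvdpp _) Mr ker.
by move=> ->; rewrite size_exp mul0n addn0.
Qed.

End RankBlock.

Section Blocks.
Variable F : fieldType.

Definition Phi (d : nat) (b : F) (k : nat) N (B : 'M[F]_N) := (B ^+ d - b%:M) ^+ k.

Lemma blk_mul a c (X1 X2 : 'M[F]_a) (Y1 Y2 : 'M[F]_c) :
  block_mx X1 0 0 Y1 *m block_mx X2 0 0 Y2 = block_mx (X1 *m X2) 0 0 (Y1 *m Y2).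
Proof. by rewrite mulmx_block !mulmx0 !mul0mx !addr0 !add0r. Qed.

Lemma blk_exp a c (X : 'M[F]_a) (Y : 'M[F]_c) n :
  (block_mx X 0 0 Y) ^+ n = block_mx (X ^+ n) 0 0 (Y ^+ n).
Proof.
elim: n => [|n IH]; first by rewrite !expr0 -scalar_mx_block.
by rewrite !exprS -!mulmxE IH blk_mul.
Qed.

Lemma blk_phi d b k a c (X : 'M[F]_a) (Y : 'M[F]_c) :
  Phi d b k (block_mx X 0 0 Y) = block_mx (Phi d b k X) 0 0 (Phi d b k Y).
Proof.
rewrite /Phi blk_exp (scalar_mx_block a c) opp_block_mx add_block_mx !oppr0 !addr0.
by rewrite blk_exp.
Qed.

Lemma rank_bdiag d b k (L : seq {poly F}) :
  \rank (Phi d b k (bdiag_comp L)) = (\sum_(g <- L) \rank (Phi d b k (companionmx g)))%N.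
Proof.
elim: L => [|g L IH]; first by rewrite big_nil /= thinmx0 mxrank0.
by rewrite big_cons /= blk_phi rank_diag_block_mx IH.
Qed.

Lemma dim_bdiag (L : seq {poly F}) :
  foldr (fun (p : {poly F}) k => (size p).-1 + k)%N 0%N L = (\sum_(g <- L) (size g).-1)%N.
Proof. by elim: L => [|g L IH]; rewrite ?big_nil ?big_cons //= IH. Qed.

Lemma sim_dim n m (A : 'M[F]_n) (B : 'M[F]_m) : mx_similar A B -> n = m.
Proof.
case=> P [Q [PQ QP _]].
apply/eqP; rewrite eqn_leq.
have := mxrankM_maxl P Q; rewrite PQ mxrank1 => H1.
have := mxrankM_maxl Q P; rewrite QP mxrank1 => H2.
by rewrite (leq_trans H1 (rank_leq_col P)) (leq_trans H2 (rank_leq_col Q)).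
Qed.

Lemma sim_rank n m (A : 'M[F]_n) (B : 'M[F]_m) d b k :
  mx_similar A B -> \rank (Phi d b k A) = \rank (Phi d b k B).
Proof.
case=> P [Q [PQ QP AP]].
pose cj (X : 'M[F]_m) := P *m X *m Q.
have cjM X Y : cj (X * Y) = cj X * cj Y.
  by rewrite /cj -!mulmxE !mulmxA -[P *m X *m Q *m P]mulmxA QP mulmx1.
have cj1 : cj 1 = 1 by rewrite /cj mulmx1 PQ.
have cjX X j : cj (X ^+ j) = cj X ^+ j.
  by elim: j => [|j IH]; rewrite ?expr0 ?cj1 // !exprS cjM IH.
have cjB X Y : cj (X - Y) = cj X - cj Y by rewrite /cj mulmxBr mulmxBl.
have cjS (c : F) : cj c%:M = c%:M by rewrite /cj mul_mx_scalar -scalemxAl PQ scalemx1.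
have AE : A = cj B by rewrite /cj -AP -mulmxA PQ mulmx1.
have -> : Phi d b k A = cj (Phi d b k B) by rewrite /Phi AE cjX cjB cjX cjS.
apply/eqP; rewrite eqn_leq; apply/andP; split.
  by rewrite /cj (leq_trans (mxrankM_maxl _ _)) ?mxrankM_maxr.
have E : Phi d b k B = Q *m cj (Phi d b k B) *m P.
  by rewrite /cj !mulmxA QP mul1mx -mulmxA QP mulmx1.
rewrite [X in (\rank X <= _)%N]E.
by rewrite (leq_trans (mxrankM_maxl _ _)) ?mxrankM_maxr.
Qed.

Lemma rep_phi (f : {poly F}) d b k : f \is monic ->
  rep f (Phi d b k (companionmx f)) (('X^d - b%:P) ^+ k).
Proof.
move=> fM; have sf : size f = (size f).-1.+1 by rewrite prednK // size_poly_gt0 monic_neq0.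
apply: (rep_exp sf); apply: rep_sub; first exact: (rep_exp sf) (rep_comp fM).
exact: rep_scal sf b.
Qed.

End Blocks.

Unset Implicit Arguments.

Lemma GLvalX (F : finFieldType) n (x : {'GL_n.+1[F]}) k : GLval (x ^+ k)%g = GLval x ^+ k.
Proof.
elim: k => [|k IH]; first by rewrite expg0 expr0.
by rewrite expgS GL_ME IH exprS.
Qed.

Lemma rank_phi_pow {F : fieldType} {N} (Y : 'M[F]_N) j d k :
  (\rank (Phi d 1 k (Y ^+ j)) <= \rank (Phi d 1 k Y))%N.
Proof.
rewrite /Phi -exprM mulnC exprM subrX1.
have cm : GRing.comm (Y ^+ d - 1) (\sum_(i < j) (Y ^+ d) ^+ i).
  apply: commr_sum => i _; apply: commr_sym; apply: commrB; last exact: commr1.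
  by rewrite /GRing.comm -!exprM -!exprD addnC.
by rewrite (exprMn_comm _ cm) -mulmxE mxrankM_maxl.
Qed.

Definition Wsum {F : fieldType} (s : seq ({poly F} * nat)) d (b : F) k :=
  (\sum_(x <- s) ((x.1 %| 'X^d - b%:P)%R * ((size x.1).-1 * minn k x.2)))%N.

Lemma per_list {F : fieldType} {n} (B : 'M[F]_n) s d b k :
  elem_divisors B s -> (forall x, x \in s -> ~~ (x.1 ^+ 2 %| 'X^d - b%:P)) ->
  (\rank (Phi d b k B) + Wsum s d b k = n)%N.
Proof.
case=> mon irr pos sim sq.
rewrite (sim_rank _ _ _ sim) rank_bdiag (sim_dim sim) dim_bdiag !big_map /Wsum -big_split /=.
apply: eq_big_seq => x xs.
rewrite [RHS]size_exp; apply: rank_block; rewrite ?mon ?irr ?pos ?sq //.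
  exact: irr.
exact: rep_phi (monic_exp _ (mon x xs)).
Qed.

Theorem mainTheorem3 (F : finFieldType) (n : nat) (A : {'GL_n.+1[F]})
    (i : nat) (sA sAi : seq ({poly F} * nat)) :
  coprime i #[A]%g ->
  elem_divisors (GLval A) sA ->
  elem_divisors (GLval A ^+ i) sAi ->
  size sAi = size sA /\
  perm_eq [seq (poly_ord x.1, x.2) | x <- sA]
          [seq (poly_ord x.1, x.2) | x <- sAi].
Proof.
move=> ci EA EAi.
set M := GLval A.
have [j Mj] : exists j, (M ^+ i) ^+ j = M.
  exists (expg_invn <[A]>%G i).
  have co : coprime #|<[A]>%G| i by rewrite /= -orderE coprime_sym.
  have := expgK co (cycle_id A); rewrite /= => E.
  by rewrite /M -!GLvalX E.
case: (finPcharP F) => c cpr hc.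
set T1 := [seq (poly_ord x.1, x.2) | x <- sA].
set T2 := [seq (poly_ord x.1, x.2) | x <- sAi].
have noX (B : 'M[F]_n.+1) s : B \in unitmx -> elem_divisors B s ->
    forall x, x \in s -> ~~ (x.1 %| 'X).
  move=> Bu Es; have := per_list _ _ 1 0 1 Es.
  have sqX x : x \in s -> ~~ (x.1 ^+ 2 %| 'X^1 - 0%:P).
    by case: Es => _ irr _ _ xs; rewrite expr1 subr0; apply: sqfree_X; apply: irr.
  move/(_ sqX).
  have -> : Phi 1 0 1 B = B.
    by rewrite /Phi !expr1; apply/matrixP => a b; rewrite !mxE mul0rn subr0.
  rewrite mxrank_unit // -{2}[n.+1]addn0 => /addnI /eqP.
  rewrite /Wsum sum_nat_seq_eq0 => /allP H x xs; have := H x xs.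
  rewrite expr1 subr0 /=; case: Es => _ irr pos _.
  have := irr_size (irr x xs); have := pos x xs.
  case: (x.1 %| 'X) => //= e0 s1 /eqP; lia.
have Mu : M \in unitmx := GL_unitmx A.
have Miu : M ^+ i \in unitmx by rewrite unitrX.
have props (B : 'M[F]_n.+1) s x : B \in unitmx -> elem_divisors B s -> x \in s ->
    [/\ (0 < poly_ord x.1)%N, coprime (poly_ord x.1) c, (0 < x.2)%N,
        (size x.1).-1 = Dq #|F| (poly_ord x.1) & (0 < (size x.1).-1)%N].
  move=> Bu Es xs; have nX := noX B s Bu Es x xs.
  case: Es => mon irr pos _.
  have [o0 De] := deg_ord (mon x xs) (irr x xs) nX.
  split => //; first exact: ord_coprime hc (irr x xs) o0.
    exact: pos.
  by have := irr_size (irr x xs); case: (size x.1) => [|[]].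
have WE d k : (0 < d)%N -> coprime d c -> Wsum sA d 1 k = Wsum sAi d 1 k.
  move=> d0 cd.
  have dn0 : d%:R != 0 :> F.
    rewrite -(dvdn_pcharf hc); apply/negP => cdv.
    by move: cd; rewrite coprime_sym prime_coprime // cdv.
  have sq (B : 'M[F]_n.+1) s : elem_divisors B s -> forall x, x \in s -> ~~ (x.1 ^+ 2 %| 'X^d - 1%:P).
    by case => _ irr _ _ x xs; rewrite polyC1; apply: sqfree_Xd => //; apply: irr.
  have E1 := per_list _ _ d 1 k EA (sq _ _ EA).
  have E2 := per_list _ _ d 1 k EAi (sq _ _ EAi).
  have R1 : \rank (Phi d 1 k (M ^+ i)) = \rank (Phi d 1 k M).
    apply/eqP; rewrite eqn_leq rank_phi_pow /=.
    by rewrite -{1}Mj rank_phi_pow.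
  rewrite R1 in E2; apply: (@addnI (\rank (Phi d 1 k M))).
  by rewrite E2; exact: E1.
have GE d k : (0 < d)%N -> coprime d c -> Gs (Dq #|F|) T1 d k = Gs (Dq #|F|) T2 d k.
  move=> d0 cd; have := WE d k d0 cd; rewrite /Gs /T1 /T2 !big_map /Wsum.
  have conv (B : 'M[F]_n.+1) s : B \in unitmx -> elem_divisors B s ->
      \sum_(x <- s) ((x.1 %| 'X^d - 1%:P)%R * ((size x.1).-1 * minn k x.2))%N =
      \sum_(x <- s) ((poly_ord x.1 %| d) * Dq #|F| (poly_ord x.1) * minn k x.2)%N.
    move=> Bu Es; apply: eq_big_seq => x xs.
    have [_ _ _ De _] := props B s x Bu Es xs.
    by rewrite polyC1 ord_dvd // De mulnA.
  by rewrite (conv _ _ Mu EA) (conv _ _ Miu EAi).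
have P : perm_eq T1 T2.
  apply: (permB (c := c) (D := Dq #|F|)) => //.
  move=> y; rewrite mem_cat => /orP[] /mapP [x xs ->] /=.
    have [-> -> -> De m0] := props M sA x Mu EA xs; by rewrite -De m0.
  have [-> -> -> De m0] := props (M ^+ i) sAi x Miu EAi xs; by rewrite -De m0.
split => //.
by have := perm_size P; rewrite !size_map.
Qed.
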